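(* For every positive integer $n$ there exists an $n$-uniform hypergraph $G=(V,E)$ with $|V|=n^2$ vertices and $|E|=n^2$ edges with the following property: for every set $F\subseteq V$ with $|F|\le n^2/100$ there exists a set $H\subseteq V$ such that $|H|\le 100\,n\log n$, $H\cap F=\emptyset$, and $H$ intersects all but at most $n$ of the edges in $E$.
   Context: A hypergraph is $n$-uniform if every edge has exactly $n$ vertices. $\log$ denotes the natural logarithm. The stated property is called the ''everywhere almost-hittable'' (EAH) property. *)

(* Defs.v *)
From mathcomp Require Import all_boot.
From Stdlib Require Import Reals.

Definition uniform {V : finType} (n : nat) (E : {set {set V}}) : Prop :=
  forall e, e \in E -> #|e| = n.

Definition missed {V : finType} (E : {set {set V}}) (H : {set V}) : nat :=
  #|[set e in E | [disjoint e & H]]|.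

(* Main.v *)
Require Import Defs.
From mathcomp Require Import all_boot all_algebra all_field zify.
From Stdlib Require Import Lia.
Set Implicit Arguments. Unset Strict Implicit. Unset Printing Implicit Defensive.

Lemma subset_card_ex (T : finType) (B : {set T}) m :
  m <= #|B| -> exists2 A : {set T}, A \subset B & #|A| = m.
Proof.
move=> hm; exists [set x in take m (enum B)].
  by apply/subsetP=> x; rewrite inE => /mem_take; rewrite mem_enum.
rewrite cardsE; have/card_uniqP-> : uniq (take m (enum B)) by rewrite take_uniq ?enum_uniq.
by rewrite size_take -cardE; case: ltnP => //; lia.
Qed.

Lemma ffact_mono t n k : t <= n -> t ^_ k * n ^ k <= n ^_ k * t ^ k.
Proof.
move=> htn; elim: k => [|k IH]; first by rewrite ffactn0 /= muln1.
rewrite !ffactnSr !expnS.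
have h : (t - k) * n <= (n - k) * t.
  case: (leqP t k) => hk; first by rewrite (eqP (_ : t - k == 0)) //; lia.
  rewrite !mulnBl; nia.
have := leq_mul IH h; nia.
Qed.

Lemma bin_half t n k : 0 < n -> 2 * t <= n -> 'C(t, k) * 2 ^ k <= 'C(n, k).
Proof.
move=> n0 h2.
have h1 := ffact_mono k (_ : t <= n). have {h1} := h1 ltac:(lia).
rewrite -!bin_ffact => h.
have h' : 'C(t, k) * n ^ k <= 'C(n, k) * t ^ k.
  by rewrite -(leq_pmul2r (fact_gt0 k)) mulnAC [X in _ <= X]mulnAC.
have hp : (2 * t) ^ k <= n ^ k.
  by case: k {h h'} => [|k] //; rewrite leq_exp2r.
rewrite -(leq_pmul2r (_ : 0 < n ^ k)); last by rewrite expn_gt0 n0.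
apply: (leq_trans (_ : _ <= 'C(n, k) * (2 * t) ^ k)); last by rewrite leq_mul2l hp orbT.
by rewrite expnMn; move: h'; nia.
Qed.

Lemma bin_ge m k : 0 < k < m -> m <= 'C(m, k).
Proof.
elim: m k => [|m IH] k; first by lia.
case: k => [|k]; first by lia.
move=> hk; rewrite binS.
case: (ltnP k.+1 m) => h.
  have := IH k.+1 ltac:(lia); have : 0 < 'C(m, k) by rewrite bin_gt0; lia.
  lia.
have -> : k = m - 1 by lia.
case: m IH hk h => [|m] IH hk h; first by lia.
rewrite subn1 /=.
have e : 'C(m.+1, m) = m.+1.
  by rewrite -{2}(subKn (leqnSn m)) subSnn bin_sub ?bin1.
rewrite e binn; lia.
Qed.
Lemma cardI_bigcup (I T : finType) (f : I -> {set T}) (A : {set T}) (s : seq I) :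
  #|A :&: \bigcup_(j <- s) f j| <= \sum_(j <- s) #|A :&: f j|.
Proof.
elim: s => [|j s IH]; first by rewrite !big_nil setI0 cards0.
rewrite !big_cons setIUr.
have := cardsUI (A :&: f j) (A :&: \bigcup_(j0 <- s) f j0); lia.
Qed.

Lemma bonf (I T : finType) (f : I -> {set T}) c (s : seq I) :
  uniq s -> (forall i j, i != j -> #|f i :&: f j| <= c) ->
  \sum_(i <- s) #|f i| <= #|\bigcup_(i <- s) f i| + c * (size s * (size s).-1).
Proof.
move=> us hc; elim: s us => [|i s IH] /=; first by rewrite !big_nil.
case/andP=> nis us; rewrite !big_cons.
have h1 := cardsUI (f i) (\bigcup_(j <- s) f j).
have h2 := cardI_bigcup f (f i) s.
have h3 : \sum_(j <- s) #|f i :&: f j| <= \sum_(j <- s) c.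
  rewrite big_seq_cond [X in _ <= X]big_seq_cond; apply: leq_sum => j /andP[js _].
  by apply: hc; apply: contraNneq nis => ->.
have h4 : \sum_(j <- s) c = c * size s by rewrite -sum1_size big_distrr /= muln1.
have := IH us; nia.
Qed.
Import GRing.Theory.

Section Constr.
Variable K : finFieldType.
Variable n : nat.
Hypothesis hKn : #|K| <= n.
Hypothesis hnK : n < 2 * #|K|.

Lemma q_gt0 : 0 < #|K|. Proof. lia. Qed.

Definition xr (r : 'I_n) : K := enum_val (Ordinal (ltn_pmod r q_gt0)).
Definition psi (y : K) : 'I_n := widen_ord hKn (enum_rank y).
Definition poly3 (p : K * K * K) : {poly K} := Poly [:: p.1.1; p.1.2; p.2].
Definition fv p (r : 'I_n) : 'I_n := psi (poly3 p).[xr r]%R.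
Definition edgep p : {set 'I_n * 'I_n} := [set (r, fv p r) | r : 'I_n].

Lemma psi_inj : injective psi.
Proof. by move=> y y' /(congr1 val) /= /val_inj /enum_rank_inj. Qed.

Lemma decomp (q r : nat) : r < 2 * q -> r = (q <= r) * q + r %% q.
Proof.
move=> h; case: leqP => hr /=; last by rewrite modn_small.
have -> : r = q + (r - q) by lia.
rewrite modnDl modn_small /=; lia.
Qed.

Lemma xr_inj2 : injective (fun r => (xr r, #|K| <= r)).
Proof.
move=> r r' [/enum_val_inj /(congr1 val) /= e1 e2].
apply: val_inj => /=.
rewrite (decomp (_ : (r : nat) < 2 * #|K|)); last by have := ltn_ord r; lia.
rewrite [X in _ = X](decomp (_ : (r' : nat) < 2 * #|K|)); last by have := ltn_ord r'; lia.
by rewrite e1 e2.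
Qed.

Lemma card_pre (Z : {set K}) : #|[set r | xr r \in Z]| <= 2 * #|Z|.
Proof.
rewrite -(card_imset [set r | xr r \in Z] xr_inj2).
have sub : [set (xr r, #|K| <= r) | r in [set r | xr r \in Z]] \subset setX Z [set: bool].
  apply/subsetP=> x /imsetP[r]; rewrite inE => hr ->; by rewrite !inE /= hr.
apply: leq_trans (subset_leq_card sub) _.
by rewrite cardsX cardsT card_bool mulnC.
Qed.

Lemma roots_le2 (D : {poly K}) : (D != 0)%R -> size D <= 3 ->
  #|[set z | root D z]| <= 2.
Proof.
move=> D0 sD.
have hall : all (root D) (enum [set z | root D z]).
  by apply/allP=> z; rewrite mem_enum inE.
have := max_poly_roots D0 hall (enum_uniq _).
move=> h; rewrite cardE; exact: leq_trans h sD.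
Qed.

Lemma poly3_diff p p' : p != p' -> (poly3 p - poly3 p' != 0)%R.
Proof.
apply: contra; rewrite subr_eq0 => /eqP e; apply/eqP.
case: p p' e => [[a b] c] [[a' b'] c'] e.
have e0 := congr1 (fun P : {poly K} => P`_0)%R e.
have e1 := congr1 (fun P : {poly K} => P`_1)%R e.
have e2 := congr1 (fun P : {poly K} => P`_2)%R e.
move: e0 e1 e2; cbv beta; rewrite /poly3 !coef_Poly /= => e0 e1 e2.
by rewrite e0 e1 e2.
Qed.

Lemma poly3_size p p' : size (poly3 p - poly3 p')%R <= 3.
Proof.
apply: leq_trans (size_polyD _ _) _; rewrite size_polyN geq_max.
by rewrite !(leq_trans (size_Poly _)).
Qed.

Lemma agree p p' : p != p' -> #|[set r | fv p r == fv p' r]| <= 4.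
Proof.
move=> hp.
have -> : [set r | fv p r == fv p' r] =
          [set r | xr r \in [set z | root (poly3 p - poly3 p')%R z]].
  apply/setP=> r; rewrite !inE /fv (inj_eq psi_inj) /root hornerD hornerN subr_eq0.
  by [].
apply: leq_trans (card_pre _) _.
have := roots_le2 (poly3_diff hp) (poly3_size p p'); lia.
Qed.

Lemma card_edge p : #|edgep p| = n.
Proof.
rewrite /edgep card_imset ?card_ord //.
by move=> r r' [].
Qed.

Lemma edgeI p p' : p != p' -> #|edgep p :&: edgep p'| <= 4.
Proof.
move=> hp; apply: leq_trans (agree hp).
have sub : edgep p :&: edgep p' \subset
   [set (r, fv p r) | r in [set r | fv p r == fv p' r]].
  apply/subsetP=> x; rewrite inE => /andP[/imsetP[r _ ->] /imsetP[r' _ e]].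
  have e1 := congr1 fst e; have e2 := congr1 snd e; simpl in e1, e2.
  apply/imsetP; exists r => //; rewrite inE; subst r'.
  by rewrite e2.
apply: leq_trans (subset_leq_card sub) _; exact: leq_imset_card.
Qed.

Lemma edge_inj : 4 < n -> injective edgep.
Proof.
move=> n4 p p' e; apply/eqP; apply: contraT => hp.
have := edgeI hp; rewrite e setIid card_edge; lia.
Qed.

End Constr.

Lemma bigcup_seq_sub (I T : finType) (f : I -> {set T}) (F : {set T}) (s : seq I) :
  (forall i, f i \subset F) -> \bigcup_(i <- s) f i \subset F.
Proof.
move=> h; elim: s => [|i s IH]; first by rewrite big_nil sub0set.
by rewrite big_cons subUset h IH.
Qed.

Lemma sum_const_seq (I : Type) (s : seq I) c : \sum_(i <- s) c = c * size s.
Proof. by rewrite -sum1_size big_distrr /= muln1. Qed.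


Lemma disjP (T : finType) (A B : {set T}) :
  reflect (forall x, x \in A -> x \in B -> False) [disjoint A & B].
Proof.
rewrite disjoints_subset; apply: (iffP subsetP) => h x xa.
  by have := h x xa; rewrite inE => /negP.
by rewrite inE; apply/negP => xb; exact: h x xa xb.
Qed.

Section Main.
Variable K : finFieldType.
Variable n : nat.
Hypothesis hKn : #|K| <= n.
Hypothesis hnK : n < 2 * #|K|.
Notation fv := (fv hKn hnK).
Notation edgep := (edgep hKn hnK).

Definition Tr (F : {set 'I_n * 'I_n}) p := [set r | (r, fv p r) \in F].

Lemma card_edgeF p F : #|edgep p :&: F| = #|Tr F p|.
Proof.
have -> : edgep p :&: F = [set (r, fv p r) | r in Tr F p].
  apply/setP=> x; rewrite inE; apply/andP/imsetP.
    by case=> /imsetP[r _ ->] hF; exists r; rewrite // inE.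
  by case=> r; rewrite inE => hr ->; split => //; apply/imsetP; exists r.
by rewrite card_imset // => r r' [].
Qed.

Lemma heavy_bound (P : {set K * K * K}) (F : {set 'I_n * 'I_n}) :
  100 * #|F| <= n * n -> 2 * #|[set p in P | n < 2 * #|Tr F p|]| <= n.
Proof.
move=> hF; set Hv := [set p in P | _].
rewrite leqNgt; apply/negP => hH.
set m := n %/ 16 + 1.
have hm : m <= #|Hv| by rewrite /m; lia.
pose s := take m (enum Hv).
have us : uniq s by rewrite take_uniq ?enum_uniq.
have ss : size s = m by rewrite size_take -cardE; case: ltnP => //; lia.
have hb := @bonf _ _ (fun p => edgep p :&: F) 4 _ us (fun i j hij => leq_trans (subset_leq_card (setISS (subsetIl _ _) (subsetIl _ _))) (edgeI hKn hnK hij)).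
have hU : #|\bigcup_(i <- s) (edgep i :&: F)| <= #|F|.
  by apply/subset_leq_card/bigcup_seq_sub => i; exact: subsetIr.
have hS : m * (n + 1) <= 2 * \sum_(i <- s) #|edgep i :&: F|.
  rewrite big_distrr /= -ss mulnC -sum_const_seq big_seq [X in _ <= X]big_seq.
  apply: leq_sum => p ps; rewrite card_edgeF.
  have : p \in Hv by move: ps => /mem_take; rewrite mem_enum.
  rewrite inE => /andP[_]; lia.
rewrite ss in hb.
have hdiv : 16 * (m - 1) <= n by rewrite /m; lia.
have hdiv2 : n < 16 * m by rewrite /m; lia.
have h1 : 16 * (m * (m - 1)) <= m * n by nia.
have hmn : m.-1 = m - 1 by lia.
rewrite hmn in hb.
have h2 : n * n <= 16 * (m * n) - n by nia.
have hm1 : 1 <= m by rewrite /m; lia.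
move: hb hU hS h1 hF h2 hm1; rewrite mulnDr muln1.
move: (\sum_(i <- s) _) (#|\bigcup_(i <- s) _|) (m * (m - 1)) (m * n) (n * n) #|F|.
lia.
Qed.

Lemma card_Tr F p : #|Tr F p| <= n.
Proof. by rewrite -[n in _ <= n]card_ord max_card. Qed.

Lemma sum_bound (P : {set K * K * K}) (F : {set 'I_n * 'I_n}) k0 :
  100 * #|F| <= n * n -> #|P| <= n * n -> 0 < n -> 2 * n <= 2 ^ k0 ->
  \sum_(p in P) 'C(#|Tr F p|, k0) <= n * 'C(n, k0).
Proof.
move=> hF hP n0 hk.
have hh := heavy_bound P hF.
set Hv := [set p in P | _] in hh.
set C := 'C(n, k0).
rewrite (bigID (fun p => n < 2 * #|Tr F p|)) /=.
set A := \sum_(i in P | _) _.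
set B := \sum_(i in P | _) _.
have hA : A <= #|Hv| * C.
  rewrite /A (eq_bigl (fun p => p \in Hv)); last by move=> p; rewrite inE.
  rewrite -sum_nat_const; apply: leq_sum => p _; exact: leq_bin2l (card_Tr F p).
have hB : 2 ^ k0 * B <= n * n * C.
  rewrite /B big_distrr /=.
  apply: leq_trans (_ : \sum_(i in P | ~~ (n < 2 * #|Tr F i|)) C <= _).
    apply: leq_sum => p /andP[_]; rewrite -leqNgt => h2.
    by rewrite mulnC; exact: bin_half.
  apply: leq_trans (_ : \sum_(i in P) C <= _).
    by rewrite [X in _ <= X](bigID (fun p => n < 2 * #|Tr F p|)) /= leq_addl.
  by rewrite sum_nat_const leq_mul.
have Q0 : 0 < 2 ^ k0 by rewrite expn_gt0.
move: hh hA hB hk; set Q := 2 ^ k0; set h := #|Hv| => hh hA hB hk.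
have e1 : Q * (2 * h) * C <= Q * n * C by rewrite leq_mul // leq_mul.
have e2 : 2 * n * (n * C) <= Q * (n * C) by rewrite leq_mul.
have e3 : Q * A <= Q * (h * C) by rewrite leq_mul.
rewrite -(leq_pmul2l (_ : 0 < 2 * Q)) ?muln_gt0 //.
nia.
Qed.

Lemma card_cond (I : finType) (A : {set I}) (c : pred I) :
  #|[set p in A | c p]| = \sum_(p in A) (c p : nat).
Proof.
rewrite -sum1_card (eq_bigl (fun p => (p \in A) && c p)); last by move=> p; rewrite inE.
by rewrite big_mkcondr; apply: eq_bigr => p _; case: (c p).
Qed.

Lemma exists_R (P : {set K * K * K}) (F : {set 'I_n * 'I_n}) k0 :
  100 * #|F| <= n * n -> #|P| <= n * n -> 0 < n -> 2 * n <= 2 ^ k0 -> k0 <= n ->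
  exists R : {set 'I_n}, #|R| = k0 /\ #|[set p in P | R \subset Tr F p]| <= n.
Proof.
move=> hF hP n0 hk hkn.
case: (boolP [exists R : {set 'I_n}, (#|R| == k0) && (#|[set p in P | R \subset Tr F p]| <= n)]).
  by case/existsP=> R /andP[/eqP h1 h2]; exists R.
move/existsPn=> hne; exfalso.
have hs := sum_bound hF hP n0 hk.
set D := [set R : {set 'I_n} | #|R| == k0].
have e : \sum_(R in D) #|[set p in P | R \subset Tr F p]| = \sum_(p in P) 'C(#|Tr F p|, k0).
  under eq_bigr do rewrite card_cond.
  rewrite exchange_big /=; apply: eq_bigr => p _.
  rewrite -cards_draws -card_cond; apply: eq_card => R; rewrite !inE andbC.
  by [].
have hD : #|D| = 'C(n, k0) by rewrite /D card_draws card_ord.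
have hC : 0 < 'C(n, k0) by rewrite bin_gt0.
have hge : \sum_(R in D) (n + 1) <= \sum_(R in D) #|[set p in P | R \subset Tr F p]|.
  apply: leq_sum => R; rewrite inE => hR; have := hne R; rewrite hR /= -ltnNge addn1.
  by [].
rewrite sum_nat_const hD e in hge.
move: hge hs hC; set C := 'C(n, k0); move: (\sum_(p in P) _) => S; nia.
Qed.

Lemma grid (P : {set K * K * K}) k0 :
  #|P| = n * n -> 4 < n -> 2 * n <= 2 ^ k0 -> k0 <= n ->
  uniform n [set edgep p | p in P] /\ #|[set edgep p | p in P]| = n * n /\
  forall F : {set 'I_n * 'I_n}, 100 * #|F| <= n * n ->
    exists H : {set 'I_n * 'I_n}, #|H| <= k0 * n /\ [disjoint H & F] /\
      missed [set edgep p | p in P] H <= n.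
Proof.
move=> hP n4 hk hkn.
have einj := @edge_inj K n hKn hnK n4.
split; first by move=> e /imsetP[p _ ->]; exact: card_edge.
split; first by rewrite card_imset.
move=> F hF.
have [R [hR hc]] := exists_R hF (eq_leq hP) (ltnW (ltnW (ltnW (ltnW n4)))) hk hkn.
set H := [set x : 'I_n * 'I_n | (x.1 \in R) && (x \notin F)].
exists H; split.
  have sub : H \subset setX R [set: 'I_n].
    by apply/subsetP=> x; rewrite !inE => /andP[-> _].
  by apply: leq_trans (subset_leq_card sub) _; rewrite cardsX cardsT card_ord hR.
split.
  by apply/disjP=> x; rewrite inE => /andP[_ hnf] hx; rewrite hx in hnf.
have disj_iff p : [disjoint edgep p & H] = (R \subset Tr F p).
  apply/disjP/subsetP.
    move=> hd r hr; rewrite inE; apply/negPn/negP => hnf.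
    apply: (hd (r, fv p r)); first by apply/imsetP; exists r.
    by rewrite inE /= hr hnf.
  move=> hs x /imsetP[r _ ->]; rewrite inE /= => /andP[hr hnf].
  by have := hs r hr; rewrite inE (negbTE hnf).
rewrite /missed.
have -> : [set e in [set edgep p | p in P] | [disjoint e & H]] =
          [set edgep p | p in [set p in P | R \subset Tr F p]].
  apply/setP => e; rewrite inE; apply/andP/imsetP.
    by case=> /imsetP[p pP ->] hd; exists p => //; rewrite inE pP -disj_iff.
  case=> p; rewrite inE => /andP[pP hs] ->; split; last by rewrite disj_iff.
  by apply/imsetP; exists p.
by rewrite card_imset.
Qed.
End Main.


Lemma expn_pow m k : expn m k = Nat.pow m k.
Proof. by elim: k => [|k IH] //; rewrite expnS IH. Qed.

Lemma transport (V W : finType) (g : V -> W) (ginj : injective g) n N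
  (E0 : {set {set V}}) (b : nat) :
  uniform n E0 ->
  (forall F0 : {set V}, 100 * #|F0| <= N ->
     exists H0 : {set V}, #|H0| <= b /\ [disjoint H0 & F0] /\ missed E0 H0 <= n) ->
  uniform n [set g @: e | e : {set V} in E0] /\ #|[set g @: e | e : {set V} in E0]| = #|E0| /\
  forall F : {set W}, 100 * #|F| <= N ->
    exists H : {set W}, #|H| <= b /\ [disjoint H & F] /\ missed [set g @: e | e : {set V} in E0] H <= n.
Proof.
move=> hu hp; split.
  by move=> e /imsetP[e0 he0 ->]; rewrite card_imset // hu.
split; first by rewrite card_imset //; exact: imset_inj.
move=> F hF.
have hF0 : 100 * #|g @^-1: F| <= N.
  apply: leq_trans hF; rewrite leq_mul2l /=.
  rewrite -(card_imset _ ginj); apply: subset_leq_card.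
  by apply/subsetP=> x /imsetP[y]; rewrite inE => hy ->.
have [H0 [h1 [h2 h3]]] := hp _ hF0.
have dj (e : {set V}) : [disjoint g @: e & g @: H0] = [disjoint e & H0].
  apply/disjP/disjP => h x hx.
    by move=> hx'; apply: (h (g x)); apply/imsetP; exists x.
  move: hx => /imsetP[y hy ->] /imsetP[z hz /ginj ez]; subst z.
  exact: h hy hz.
exists (g @: H0); split; first by rewrite card_imset.
split.
  apply/disjP=> x /imsetP[y hy ->] hgy.
  by move/disjP: h2 => /(_ y hy); apply; rewrite inE.
rewrite /missed.
have -> : [set e in [set g @: e | e : {set V} in E0] | [disjoint e & g @: H0]] =
          [set g @: e | e : {set V} in [set e in E0 | [disjoint e & H0]]].
  apply/setP => e; rewrite inE; apply/andP/imsetP.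
    by case=> /imsetP[e0 he0 ->] hd; exists e0 => //; rewrite inE he0 -dj.
  case=> e0; rewrite inE => /andP[he0 hd] ->; split; last by rewrite dj.
  by apply/imsetP; exists e0.
by rewrite card_imset //; exact: imset_inj.
Qed.

Lemma small_E (V : finType) n : 0 < n -> #|V| = n * n ->
  exists E : {set {set V}}, uniform n E /\ #|E| = n * n.
Proof.
move=> n0 hV.
have hc : n * n <= #|[set e : {set V} | #|e| == n]|.
  rewrite card_draws hV.
  case: (ltnP 1 n) => h; first by apply: bin_ge; nia.
  have -> : n = 1 by lia.
  by rewrite bin1.
have [E hE cE] := subset_card_ex hc.
exists E; split => // e he.
by move/subsetP: hE => /(_ e he); rewrite inE => /eqP.
Qed.

Lemma two_pow k : 3 <= k -> k + 2 <= 2 ^ k.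
Proof.
move=> hk; have -> : k = (k - 3) + 3 by lia.
rewrite expnD; have := ltn_expl (k - 3) (ltnSn 1); rewrite (_ : 2 ^ 3 = 8) //; lia.
Qed.

Lemma big_case n : 8 <= n ->
  exists k0, (2 ^ (k0 - 2) <= n) /\ 3 <= k0 - 2 /\ k0 = (k0 - 2) + 2 /\
  exists E : {set {set 'I_n * 'I_n}},
    uniform n E /\ #|E| = n * n /\
    forall F : {set 'I_n * 'I_n}, 100 * #|F| <= n * n ->
      exists H : {set 'I_n * 'I_n}, #|H| <= k0 * n /\ [disjoint H & F] /\ missed E H <= n.
Proof.
move=> n8.
set k := trunc_log 2 n.
have hk1 : 2 ^ k <= n by apply: trunc_logP; lia.
have hk2 : n < 2 ^ k.+1 by apply: trunc_log_ltn.
have hk3 : 3 <= k.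
  rewrite leqNgt; apply/negP => hk; move: hk2.
  have : 2 ^ k.+1 <= 2 ^ 3 by rewrite leq_exp2l //.
  rewrite (_ : 2 ^ 3 = 8) //; lia.
have k0 : 0 < k by lia.
have [K _ cK] := pPrimePowerField (isT : prime 2) k0.
have hKn : #|K| <= n by rewrite cK.
have hnK : n < 2 * #|K| by rewrite cK -expnS.
have hP : n * n <= #|[set: K * K * K]|.
  rewrite cardsT !card_prod.
  move: hnK n8; move: #|K| => q; nia.
have [P _ cP] := subset_card_ex hP.
exists (k + 2); split; first by rewrite addnK.
split; first by rewrite addnK.
split; first by rewrite addnK.
exists [set edgep hKn hnK p | p in P].
apply: grid => //; first by lia.
  by rewrite expnD (_ : 2 ^ 2 = 4) //; lia.
by have := two_pow hk3; lia.
Qed.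

From Stdlib Require Import Reals Lra.

Lemma real_big n k0 : (8 <= n)%N -> (expn 2 (k0 - 2) <= n)%N -> (3 <= k0 - 2)%N ->
  k0 = (k0 - 2 + 2)%N -> (INR (k0 * n) <= 100 * INR n * ln (INR n))%R.
Proof.
move=> n8 hk hk3 e.
set k := (k0 - 2)%N in hk hk3 e.
have hk' : (INR (2 ^ k) <= INR n)%R by apply: le_INR; rewrite -expn_pow; apply/leP.
rewrite pow_INR in hk'.
have h2 : (0 < INR 2 ^ k)%R by apply: pow_lt; simpl; lra.
have hln : (ln (INR 2 ^ k) <= ln (INR n))%R.
  case: (Rle_lt_or_eq_dec _ _ hk') => h; last by rewrite h; lra.
  by apply: Rlt_le; apply: ln_increasing.
rewrite ln_pow in hln; last by simpl; lra.
have l2 := ln_lt_2.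
have ek : INR 2 = 2%R by simpl; lra.
rewrite ek in hln.
have k3 : (INR 3 <= INR k)%R by apply: le_INR; apply/leP.
simpl in k3.
have n0 : (0 <= INR n)%R by apply: pos_INR.
rewrite mult_INR e plus_INR ek.
have L1 : (INR k * (ln 2 - / 2) >= 0)%R by apply: Rle_ge; apply: Rmult_le_pos; lra.
have L : (INR k + 2 <= 100 * ln (INR n))%R by nra.
rewrite (Rmult_comm 100) Rmult_assoc Rmult_comm.
by apply: Rmult_le_compat_l.
Qed.

Lemma real_small n : (2 <= n)%N -> (n < 8)%N ->
  (INR (n * n) <= 100 * INR n * ln (INR n))%R.
Proof.
move=> n2 n8.
have h2' : (INR 2 <= INR n)%R by apply: le_INR; apply/leP.
have h2 : (2 <= INR n)%R by simpl in h2'; lra.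
have h8 : (INR n <= INR 8)%R by apply: le_INR; apply/leP; lia.
simpl in h8.
have hln : (ln 2 <= ln (INR n))%R.
  case: (Rle_lt_or_eq_dec _ _ h2) => h; last by rewrite -h; lra.
  by apply: Rlt_le; apply: ln_increasing; lra.
have l2 := ln_lt_2.
rewrite mult_INR; nra.
Qed.

Theorem lemma3p1 :
  forall n : nat, (0 < n)%N ->
  exists E : {set {set 'I_(n ^ 2)}},
    uniform n E /\ #|E| = (n ^ 2)%N /\
    forall F : {set 'I_(n ^ 2)}, (100 * #|F| <= n ^ 2)%N ->
      exists H : {set 'I_(n ^ 2)},
        (INR #|H| <= 100 * INR n * ln (INR n))%R /\
        [disjoint H & F] /\
        (missed E H <= n)%N.
Proof.
move=> n n0.
have en : (n ^ 2 = n * n)%N by rewrite /= Nat.mul_1_r.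
have e2 : #|{: 'I_n * 'I_n}| = (n ^ 2)%N by rewrite card_prod card_ord en.
pose g (x : 'I_n * 'I_n) : 'I_(n ^ 2) := cast_ord e2 (enum_rank x).
have ginj : injective g by move=> x y /cast_ord_inj /enum_rank_inj.
case: (ltnP n 8) => n8.
  have cV : #|'I_(n ^ 2)| = (n * n)%N by rewrite card_ord en.
  have [E [hu cE]] := small_E n0 cV.
  exists E; split => //; split; first by rewrite cE en.
  move=> F hF.
  case: (ltnP 1 n) => n1; last first.
    have n1' : n = 1%N by lia.
    exists set0; split.
      by rewrite cards0 n1' /= ln_1; lra.
    split; first by apply/disjP => x; rewrite inE.
    apply: leq_trans (_ : #|E| <= n).
      by apply: subset_leq_card; apply/subsetP => e; rewrite inE => /andP[].
    by rewrite cE n1'.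
  have F0 : #|F| = 0%N by move: hF; move: #|F| => f; rewrite en; nia.
  exists (~: F); split.
    apply: Rle_trans (real_small n1 n8); apply: le_INR; apply/leP.
    by rewrite -cV max_card.
  split; first by rewrite disjoints_subset.
  rewrite /missed; suff -> : [set e in E | [disjoint e & ~: F]] = set0 by rewrite cards0.
  apply/setP => e; rewrite !inE; apply/negbTE/negP => /andP[he hd].
  rewrite disjoints_subset setCK in hd.
  have := subset_leq_card hd; rewrite hu // F0; lia.
have [k0 [hk1 [hk3 [hk0 [E0 [hu [cE hp]]]]]]] := big_case n8.
have [hu' [cE' hp']] := transport ginj hu hp.
exists [set g @: e | e : {set 'I_n * 'I_n} in E0].
split => //; split; first by rewrite cE' cE en.
move=> F hF.
have hF' : (100 * #|F| <= n * n)%N by move: hF; move: #|F| => f; rewrite en.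
have [H [h1 [h2 h3]]] := hp' F hF'.
exists H; split => //.
apply: Rle_trans (real_big n8 hk1 hk3 hk0).
by apply: le_INR; apply/leP.
Qed.
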